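(* Let $q=p^k$ be a power of a prime $p$, $m\ge1$, and let $U_2$ act on $\mathbb{F}_q[x,y]$ fixing $x$ and sending $y\mapsto y+ax$, $a\in\mathbb{F}_q$. Put $V_2=y^q-yx^{q-1}$. Then the images in $Q(m,2)=\mathbb{F}_q[x,y]/(x^{q^m},y^{q^m})$ of the following two families of polynomials form an $\mathbb{F}_q$-basis of $Q(m,2)^{U_2}$: (1) $x^iy^j$ with $0\le i\le q^m-1$, $0\le j\le q^m-1$, $q\nmid j$, and $i+p^{v_p(j)}\ge q^m$; (2) $x^aV_2^b$ with $0\le a\le q^m-1$ and $0\le b\le q^{m-1}-1$.
   Context: $v_p(j)$ denotes the $p$-adic valuation of the positive integer $j$. $U_2\subset GL_2(\mathbb{F}_q)$ is the group of upper triangular matrices with diagonal entries $1$, acting on $\mathbb{F}_q[x,y]$ (with $x=x_1$, $y=x_2$) via $\sigma(x_j)=\sum_i\sigma_{ij}x_i$, and the action descends to $Q(m,2)$; $Q(m,2)^{U_2}$ is the subring of fixed elements. *)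

(* Defs.v *)
From HB Require Import structures.
From mathcomp Require Import all_boot all_order all_algebra all_field.
From mathcomp Require Import mpoly.
Set Implicit Arguments. Unset Strict Implicit. Unset Printing Implicit Defensive.
Import GRing.Theory.
Local Open Scope ring_scope.

Definition mX (F : finFieldType) : {mpoly F[2]} := 'X_(ord0 : 'I_2).
Definition mY (F : finFieldType) : {mpoly F[2]} := 'X_(ord_max : 'I_2).

Definition U2act (F : finFieldType) (a : F) (f : {mpoly F[2]}) : {mpoly F[2]} :=
  f \mPo [tuple mX F; mY F + a *: mX F].

(* membership in the ideal (x^N, y^N) of F[x,y]; Q(m,2) = F[x,y]/(x^N,y^N), N = q^m *)
Definition inQideal (F : finFieldType) (N : nat) (f : {mpoly F[2]}) : Prop :=
  exists g h : {mpoly F[2]}, f = mX F ^+ N * g + mY F ^+ N * h.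

Definition QU2inv (F : finFieldType) (N : nat) (f : {mpoly F[2]}) : Prop :=
  forall a : F, inQideal N (U2act a f - f).

Definition V2 (F : finFieldType) : {mpoly F[2]} :=
  mY F ^+ #|F| - mY F * mX F ^+ (#|F|.-1).

Definition isBasisQU2 (F : finFieldType) (N : nat) (I : finType) (P : pred I)
    (b : I -> {mpoly F[2]}) : Prop :=
  [/\ forall i, P i -> QU2inv N (b i),
      forall c : I -> F, inQideal N (\sum_(i | P i) c i *: b i) ->
        forall i, P i -> c i = 0
    & forall f : {mpoly F[2]}, QU2inv N f ->
        exists c : I -> F, inQideal N (f - \sum_(i | P i) c i *: b i)].

(* index set: family (1) indexed by (i,j), family (2) indexed by (a,b) *)
Definition famIdx (N M : nat) : finType := (('I_N * 'I_N) + ('I_N * 'I_M))%type.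

Definition famPred (q p N M : nat) : pred (famIdx N M) :=
  fun t => match t with
           | inl ij => ~~ (q %| ij.2)%N && (N <= ij.1 + p ^ logn p ij.2)%N
           | inr _ => true
           end.

Definition famPoly (F : finFieldType) (N M : nat) (t : famIdx N M) : {mpoly F[2]} :=
  match t with
  | inl ij => mX F ^+ ij.1 * mY F ^+ ij.2
  | inr ab => mX F ^+ ab.1 * V2 F ^+ ab.2
  end.

(* Main.v *)
Require Import Defs.
From HB Require Import structures.
From mathcomp Require Import all_boot all_order all_algebra all_field.
From mathcomp Require Import mpoly.
From mathcomp Require Import zify ring.
Set Implicit Arguments. Unset Strict Implicit. Unset Printing Implicit Defensive.
Import GRing.Theory.
Local Open Scope ring_scope.

Section Basics.
Variable F : finFieldType.
Local Notation R := {mpoly F[2]}.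
Implicit Types (a c : F) (f g h : R).

Definition mon (i j : nat) : 'X_{1..2} :=
  (U_(ord0 : 'I_2) *+ i + U_(ord_max : 'I_2) *+ j)%MM.

Lemma mon0 i j : mon i j ord0 = i.
Proof. by rewrite /mon mnmDE !mulmnE !mnm1E /=; lia. Qed.
Lemma mon1 i j : mon i j ord_max = j.
Proof. by rewrite /mon mnmDE !mulmnE !mnm1E /=; lia. Qed.

Lemma monK (m : 'X_{1..2}) : m = mon (m ord0) (m ord_max).
Proof.
apply/mnmP => i; case: i => [[|[|i]] Hi] //.
- have -> : Ordinal Hi = ord0 by apply/val_inj.
  by rewrite mon0.
- have -> : Ordinal Hi = ord_max by apply/val_inj.
  by rewrite mon1.
Qed.

Lemma mon_eq i j u w : (mon i j == mon u w) = (i == u) && (j == w).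
Proof.
apply/eqP/andP => [H|[/eqP-> /eqP->] //].
by split; apply/eqP; [rewrite -(mon0 i j) -(mon0 u w) H | rewrite -(mon1 i j) -(mon1 u w) H].
Qed.

Lemma monD i j u w : (mon i j + mon u w)%MM = mon (i + u) (j + w).
Proof. rewrite (monK (_ + _)%MM) !mnmDE !mulmnE !mnm1E /=; congr mon; lia. Qed.

Lemma XYmon i j : Defs.mX F ^+ i * Defs.mY F ^+ j = 'X_[mon i j].
Proof. by rewrite /Defs.mX /Defs.mY !mpolyXn -mpolyXD. Qed.

Definition coef (f : R) i j := f@_(mon i j).

Lemma coefX i j u w : coef ('X_[mon i j]) u w = ((i == u) && (j == w))%:R.
Proof. by rewrite /coef mcoeffX mon_eq. Qed.

Lemma coefXM i j (g : R) u w :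
  coef ('X_[mon i j] * g) u w =
  if (i <= u)%N && (j <= w)%N then coef g (u - i) (w - j) else 0.
Proof.
rewrite {1}(mpolyE g) mulr_sumr /coef raddf_sum /=.
under eq_bigr => m _ do rewrite -scalerAr -mpolyXD mcoeffZ mcoeffX.
case: ifP => [/andP[le1 le2]|Hn].
  have -> : mon u w = (mon i j + mon (u - i) (w - j))%MM by rewrite monD; congr mon; lia.
  case: (boolP (mon (u - i) (w - j) \in msupp g)) => Hin.
    rewrite (bigD1_seq _ Hin) //= eqm_add2l eqxx mulr1 big1 ?addr0 // => m Hm.
    by rewrite eqm_add2l (negbTE Hm) mulr0.
  rewrite big1_seq ?(memN_msupp_eq0 Hin) // => m /= Hm.
  rewrite eqm_add2l; case: eqP => [E|]; last by rewrite mulr0.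
  by move: Hin; rewrite -E Hm.
rewrite big1 // => m _; rewrite (monK m) monD mon_eq.
case: eqP => [E|]; last by rewrite mulr0.
case: eqP => [E2|]; last by rewrite mulr0.
by move: Hn; rewrite -E -E2 !leq_addr.
Qed.


Lemma coef_split (P : pred 'X_{1..2}) (f : R) mm :
  (\sum_(m <- msupp f | P m) f@_m *: 'X_[m])@_mm = if P mm then f@_mm else 0.
Proof.
rewrite raddf_sum /=.
under eq_bigr => m _ do rewrite mcoeffZ mcoeffX.
rewrite big_mkcond /=.
case: (boolP (mm \in msupp f)) => Hin.
  rewrite (bigD1_seq _ Hin) //= big1 ?addr0.
    by case: (P mm); rewrite ?eqxx ?mulr1.
  move=> m Hm; rewrite (negbTE Hm) mulr0; by case: (P m).
rewrite (memN_msupp_eq0 Hin) if_same big1_seq // => m /= Hm.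
case: eqP => [E|]; last by rewrite mulr0 if_same.
by move: Hin; rewrite -E Hm.
Qed.

Definition Zq N (f : R) := forall u w, (u < N)%N -> (w < N)%N -> coef f u w = 0.

Lemma mXN N : Defs.mX F ^+ N = 'X_[mon N 0].
Proof. by rewrite -XYmon expr0 mulr1. Qed.
Lemma mYN N : Defs.mY F ^+ N = 'X_[mon 0 N].
Proof. by rewrite -XYmon expr0 mul1r. Qed.

Lemma inQ_Z N f : inQideal N f <-> Zq N f.
Proof.
split.
  case=> g [h ->] u w Hu Hw.
  rewrite /coef mcoeffD -!/(coef _ u w) mXN mYN !coefXM.
  by rewrite !ifF ?addr0 //; apply/negbTE; rewrite negb_and -!ltnNge ?Hu ?Hw ?orbT.
move=> HZ.
pose inr (m : 'X_{1..2}) := (m ord0 < N)%N && (m ord_max < N)%N.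
have Ef : f = \sum_(m <- msupp f | ~~ inr m) f@_m *: 'X_[m].
  apply/mpolyP => mm; rewrite coef_split; case: ifP => // /negbFE /andP[H1 H2].
  by rewrite (monK mm) -/(coef _ _ _) HZ.
exists (\sum_(m <- msupp f | ~~ inr m && (N <= m ord0)%N) f@_m *: 'X_[mon (m ord0 - N) (m ord_max)]).
exists (\sum_(m <- msupp f | ~~ inr m && ~~ (N <= m ord0)%N) f@_m *: 'X_[mon (m ord0) (m ord_max - N)]).
rewrite mXN mYN !mulr_sumr {1}Ef (bigID (fun m : 'X_{1..2} => (N <= m ord0)%N)) /=.
congr (_ + _); apply: eq_bigr => m /andP[H1 H2]; rewrite -scalerAr -mpolyXD monD.
  do 2 apply: congr1; apply/eqP; rewrite {1}(monK m) mon_eq.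
  by apply/andP; split; apply/eqP; lia.
do 2 apply: congr1; apply/eqP; rewrite {1}(monK m) mon_eq.
by apply/andP; split; apply/eqP; move: H1 H2; rewrite /inr; lia.
Qed.


Lemma Zq0 N : Zq N 0.
Proof. by move=> u w _ _; rewrite /coef mcoeff0. Qed.
Lemma Zq_add N f g : Zq N f -> Zq N g -> Zq N (f + g).
Proof. by move=> Hf Hg u w Hu Hw; rewrite /coef mcoeffD -!/(coef _ _ _) Hf ?Hg ?addr0. Qed.
Lemma Zq_opp N f : Zq N f -> Zq N (- f).
Proof. by move=> Hf u w Hu Hw; rewrite /coef mcoeffN -!/(coef _ _ _) Hf ?oppr0. Qed.
Lemma Zq_sub N f g : Zq N f -> Zq N g -> Zq N (f - g).
Proof. by move=> Hf Hg; apply: Zq_add => //; apply: Zq_opp. Qed.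
Lemma Zq_scale N c f : Zq N f -> Zq N (c *: f).
Proof. by move=> Hf u w Hu Hw; rewrite /coef mcoeffZ -!/(coef _ _ _) Hf ?mulr0. Qed.
Lemma Zq_sum N (I : finType) (P : pred I) (G : I -> R) :
  (forall i, P i -> Zq N (G i)) -> Zq N (\sum_(i | P i) G i).
Proof.
move=> H; apply: (big_ind (Zq N)) => //; [exact: Zq0 | exact: Zq_add].
Qed.

Definition trunc N (f : R) : R :=
  \sum_(m <- msupp f | (m ord0 < N)%N && (m ord_max < N)%N) f@_m *: 'X_[m].

Lemma coef_trunc N f u w :
  coef (trunc N f) u w = if (u < N)%N && (w < N)%N then coef f u w else 0.
Proof. by rewrite /coef /trunc coef_split mon0 mon1. Qed.

Lemma Zq_trunc N f : Zq N (f - trunc N f).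
Proof.
move=> u w Hu Hw; rewrite /coef mcoeffB -!/(coef _ _ _) coef_trunc Hu Hw /=.
by rewrite subrr.
Qed.

Definition tup (a : F) := [tuple Defs.mX F; Defs.mY F + a *: Defs.mX F].

Lemma U2actE a f : U2act a f = f \mPo tup a.
Proof. by []. Qed.

Lemma U2actM a f g : U2act a (f * g) = U2act a f * U2act a g.
Proof. by rewrite !U2actE rmorphM. Qed.
Lemma U2actXn a f n : U2act a (f ^+ n) = U2act a f ^+ n.
Proof. by rewrite !U2actE rmorphXn. Qed.
Lemma U2actB a f g : U2act a (f - g) = U2act a f - U2act a g.
Proof. by rewrite !U2actE raddfB. Qed.
Lemma U2actD a f g : U2act a (f + g) = U2act a f + U2act a g.
Proof. by rewrite !U2actE raddfD. Qed.
Lemma U2actZ a c f : U2act a (c *: f) = c *: U2act a f.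
Proof. by rewrite !U2actE comp_mpolyZ. Qed.
Lemma U2actx a : U2act a (Defs.mX F) = Defs.mX F.
Proof. by rewrite U2actE /Defs.mX comp_mpolyXU. Qed.
Lemma U2acty a : U2act a (Defs.mY F) = Defs.mY F + a *: Defs.mX F.
Proof. by rewrite U2actE /Defs.mY comp_mpolyXU. Qed.
Lemma U2act_sum a (I : finType) (P : pred I) (G : I -> R) :
  U2act a (\sum_(i | P i) G i) = \sum_(i | P i) U2act a (G i).
Proof. by rewrite U2actE raddf_sum. Qed.

End Basics.

Section Char.
Variable F : finFieldType.
Local Notation R := {mpoly F[2]}.
Implicit Types (a c : F) (f g h : R).
Variable p : nat.
Hypothesis pF : p \in [pchar F].

Lemma pR : p \in [pchar R].
Proof. exact: (rmorph_pchar (mpolyC 2 (R:=F))). Qed.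

Lemma frobD e (x y : R) : (x + y) ^+ (p ^ e) = x ^+ (p ^ e) + y ^+ (p ^ e).
Proof.
elim: e => [|e IH]; first by rewrite !expr1.
rewrite expnSr !exprM IH exprDn_pchar //.
by rewrite (eq_pnat _ (pcharf_eq pR)) pnat_id // (pcharf_prime pR).
Qed.

End Char.

Lemma sum_single (K : nmodType) n (G : nat -> K) t0 :
  (forall t, (t < n)%N -> t != t0 -> G t = 0) ->
  \sum_(t < n) G t = if (t0 < n)%N then G t0 else 0.
Proof.
move=> H; case: ifP => Ht0.
  rewrite (bigD1 (Ordinal Ht0)) //= big1 ?addr0 // => t Ht.
  apply: H => //; apply: contra Ht => /eqP E; apply/eqP/val_inj => /=; exact: E.
rewrite big1 // => t _; apply: H => //; apply/eqP => E; by rewrite -E ltn_ord in Ht0.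
Qed.

Section Action.
Variable F : finFieldType.
Local Notation R := {mpoly F[2]}.
Implicit Types (a c : F) (f g h : R).
Variable p : nat.
Hypothesis pF : p \in [pchar F].

Lemma Zq_U2act e a f : Zq (p ^ e) f -> Zq (p ^ e) (U2act a f).
Proof.
move/inQ_Z => [g [h ->]]; apply/inQ_Z.
exists (U2act a g + a ^+ (p ^ e) *: U2act a h), (U2act a h).
rewrite U2actD !U2actM !U2actXn U2actx U2acty (frobD pF) exprZn.
by rewrite -!mul_mpolyC; ring.
Qed.

Lemma U2actXmon a i j :
  U2act a 'X_[mon i j] =
  \sum_(t < j.+1) (('C(j, t))%:R * a ^+ t) *: 'X_[mon (i + t) (j - t)].
Proof.
rewrite -XYmon U2actM !U2actXn U2actx U2acty exprDn mulr_sumr.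
apply: eq_bigr => t _.
rewrite -XYmon exprZn exprD -!mul_mpolyC -mulr_natl mpolyCM -mpolyC_nat.
ring.
Qed.


Lemma coefU_mon a i j u w :
  coef (U2act a 'X_[mon i j]) u w =
  if (i <= u)%N && (u - i + w == j)%N then ('C(j, w))%:R * a ^+ (u - i) else 0.
Proof.
rewrite U2actXmon /coef raddf_sum /=.
under eq_bigr => t _ do rewrite mcoeffZ mcoeffX mon_eq.
rewrite (@sum_single _ _ (fun t : nat => ('C(j, t)%:R * a ^+ t) * ((i + t == u)%N && (j - t == w)%N)%:R) (u - i)%N).
  case: ifP => H1.
    case: ifP => H2.
      have -> : 'C(j, u - i) = 'C(j, w) by rewrite (_ : u - i = j - w)%N ?bin_sub //; lia.
      by rewrite (_ : (i + (u - i) == u)%N && (j - (u - i) == w)%N = true) ?mulr1 //; lia.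
    by rewrite (_ : (i + (u - i) == u)%N && (j - (u - i) == w)%N = false) ?mulr0 //; lia.
  by rewrite ifF //; lia.
move=> t Ht Hne; rewrite (_ : (i + t == u)%N && (j - t == w)%N = false) ?mulr0 //; lia.
Qed.


Lemma coefU a h u w :
  coef (U2act a h) u w =
  \sum_(l < u.+1) coef h (u - l) (w + l) * ('C(w + l, w))%:R * a ^+ l.
Proof.
rewrite {1}(mpolyE h) U2actE raddf_sum /coef raddf_sum /=.
under [RHS]eq_bigr => l _ do rewrite {1}(mpolyE h) raddf_sum !mulr_suml.
rewrite exchange_big /=; apply: eq_bigr => m _.
rewrite comp_mpolyZ mcoeffZ -U2actE {2}(monK m) -/(coef _ u w) coefU_mon.
under eq_bigr => l _ do rewrite mcoeffZ mcoeffX {2}(monK m) mon_eq -!mulrA.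
rewrite -mulr_sumr; congr (_ * _).
rewrite (@sum_single _ _ (fun l : nat => ((m ord0 == u - l)%N && (m ord_max == w + l)%N)%:R * ('C(w + l, w)%:R * a ^+ l)) (u - m ord0)%N).
  case: ifP => H1.
    rewrite ifT; last by lia.
    rewrite (_ : (m ord0 == u - (u - m ord0))%N && (m ord_max == w + (u - m ord0))%N = true) ?mul1r; last by lia.
    by rewrite (_ : w + (u - m ord0) = m ord_max)%N //; lia.
  case: ifP => H2 //.
  by rewrite (_ : (m ord0 == u - (u - m ord0))%N && (m ord_max == w + (u - m ord0))%N = false) ?mul0r //; lia.
move=> l Hl Hne.
by rewrite (_ : (m ord0 == u - l)%N && (m ord_max == w + l)%N = false) ?mul0r //; lia.
Qed.

End Action.


Lemma binom2 (K : comRingType) (u v : K) n :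
  exists T : K, (u + v) ^+ n = u ^+ n + (u ^+ n.-1 * v) *+ n + v ^+ 2 * T.
Proof.
elim: n => [|n [T IH]]; first by exists 0; rewrite !expr0 mulr0n mulr0 !addr0.
case: n IH => [|n] IH.
  by exists 0; rewrite !expr0 expr1 mulr0 addr0 mul1r mulr1n.
exists (u * T + v * T + u ^+ n *+ n.+1).
rewrite exprS IH (exprS u n.+1) (exprS u n) [n.+1.-1]/=.
rewrite -(mulr_natr (u ^+ n * v)) -(mulr_natr (u * u ^+ n * v)) -(mulr_natr (u ^+ n)).
rewrite [(n.+2)%:R]mulrS.
move: (u ^+ n) ((n.+1)%:R : K) => U c.
rewrite expr2.
ring.
Qed.

Lemma poly_finF (K : finFieldType) (Q : {poly K}) :
  (size Q <= #|K|)%N -> (forall a, Q.[a] = 0) -> Q = 0.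
Proof.
move=> Hs Hr; apply: (@roots_geq_poly_eq0 _ Q (enum K)).
- by apply/allP => a _; rewrite /root Hr.
- exact: enum_uniq.
- by rewrite -cardE.
Qed.

Section Main.
Variable F : finFieldType.
Local Notation R := {mpoly F[2]}.
Implicit Types (a c : F) (f g h : R).
Variables (p k : nat).
Hypotheses (pr_p : prime p) (k_gt0 : (0 < k)%N) (Hq : #|F| = (p ^ k)%N).
Local Notation q := #|F|.
Local Notation xx := (Defs.mX F).
Local Notation yy := (Defs.mY F).

Lemma pF : p \in [pchar F].
Proof. exact: card_finPcharP Hq pr_p. Qed.

Lemma q_ge2 : (2 <= q)%N.
Proof.
rewrite Hq; apply: leq_trans (prime_gt1 pr_p) _.
by rewrite -{1}(expn1 p) leq_exp2l // prime_gt1.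
Qed.

Lemma coef1 u w : coef (1 : R) u w = ((u == 0) && (w == 0))%N%:R.
Proof. by rewrite -(mulr1 (1 : R)) -{1}(expr0 xx) -(expr0 yy) XYmon coefX !(eq_sym 0%N). Qed.

Lemma coefVpow b u w : (q * b <= w)%N ->
  coef (V2 F ^+ b) u w = ((u == 0) && (w == q * b))%N%:R.
Proof.
have q2 := q_ge2.
elim: b u w => [|b IH] u w Hw; first by rewrite expr0 coef1 muln0.
have EV : V2 F = 'X_[mon 0 q] - 'X_[mon q.-1 1].
  by rewrite /V2 -!XYmon expr0 mul1r expr1 mulrC.
rewrite exprSr {2}EV mulrBr !(mulrC (V2 F ^+ b)) /coef mcoeffB -!/(coef _ _ _) !coefXM.
rewrite ifT; last by nia.
rewrite IH; last by nia.
case: ifP => H1.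
  rewrite IH; last by nia.
  rewrite (_ : (u - (q.-1) == 0)%N && (w - 1 == q * b)%N = false) ?subr0; last by nia.
  by congr (_%:R); congr nat_of_bool; apply/idP/idP; nia.
by rewrite subr0; congr (_%:R); congr nat_of_bool; apply/idP/idP; nia.
Qed.

Lemma coefxV i b u w : (q * b <= w)%N ->
  coef (xx ^+ i * V2 F ^+ b) u w = ((u == i) && (w == q * b))%N%:R.
Proof.
move=> Hw; rewrite (mXN F) coefXM leq0n andbT subn0.
case: ifP => H; first by rewrite coefVpow //; congr (_%:R); congr nat_of_bool; apply/idP/idP; lia.
by rewrite (_ : (u == i)%N = false) //; lia.
Qed.


Lemma U2actV a : U2act a (V2 F) = V2 F.
Proof.
rewrite /V2 U2actB U2actM !U2actXn U2actx U2acty.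
have Fr : (yy + a *: xx) ^+ q = yy ^+ q + (a *: xx) ^+ q by rewrite Hq (frobD pF).
have Eq : xx ^+ q = xx * xx ^+ q.-1 by rewrite -exprS prednK // (leq_trans _ q_ge2).
rewrite Fr exprZn expf_card Eq -!mul_mpolyC; ring.
Qed.

Lemma inv_fam2 a i b : U2act a (xx ^+ i * V2 F ^+ b) = xx ^+ i * V2 F ^+ b.
Proof. by rewrite U2actM !U2actXn U2actx U2actV. Qed.

Lemma inv_fam1 a N i j : (N <= i + p ^ logn p j)%N ->
  inQideal N (U2act a (xx ^+ i * yy ^+ j) - xx ^+ i * yy ^+ j).
Proof.
move=> HN; set P := (p ^ logn p j)%N.
have Hj : j = (j %/ P * P)%N by rewrite divnK // pfactor_dvdnn.
rewrite U2actM !U2actXn U2actx U2acty Hj mulnC !exprM (frobD pF) exprZn.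
rewrite -mulrBr subrXX.
set S := \sum_(_ < _) _.
exists (xx ^+ (i + P - N) * (a ^+ P *: S)), 0.
have E : xx ^+ i * xx ^+ P = xx ^+ N * xx ^+ (i + P - N) by rewrite -!exprD subnKC.
rewrite mulr0 addr0 addrAC subrr add0r -!mul_mpolyC.
transitivity ((xx ^+ i * xx ^+ P) * ((a ^+ P)%:MP * S)); first by ring.
by rewrite E; ring.
Qed.


Variable m : nat.
Hypothesis m_ge1 : (1 <= m)%N.
Local Notation N := (q ^ m)%N.
Local Notation M := (q ^ m.-1)%N.
Local Notation Idx := (famIdx N M).
Local Notation P := (@famPred q p N M).
Local Notation B := (@famPoly F N M).

Lemma NqM : N = (q * M)%N.
Proof. by rewrite -expnS prednK. Qed.

Definition S (cc : Idx -> F) : R := \sum_(t | P t) cc t *: B t.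

Lemma coefS cc u w : coef (S cc) u w =
  \sum_(ij : 'I_N * 'I_N | P (inl ij)) cc (inl ij) * coef (xx ^+ ij.1 * yy ^+ ij.2) u w +
  \sum_(ab : 'I_N * 'I_M) cc (inr ab) * coef (xx ^+ ab.1 * V2 F ^+ ab.2) u w.
Proof.
rewrite /S /coef raddf_sum big_sumType /=.
by congr (_ + _); apply: eq_bigr => t _; rewrite mcoeffZ.
Qed.

Lemma coef_fam_qb cc u b (Hu : (u < N)%N) (Hb : (b < M)%N) :
  (forall ab : 'I_N * 'I_M, (b < ab.2)%N -> cc (inr ab) = 0) ->
  coef (S cc) u (q * b) = cc (inr (Ordinal Hu, Ordinal Hb)).
Proof.
move=> Hc; rewrite coefS big1 ?add0r.
  rewrite (bigD1 (Ordinal Hu, Ordinal Hb)) //= coefxV // eqxx eqxx mulr1.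
  rewrite big1 ?addr0 // => [[i b']] /= Hne.
  case: (ltnP b b') => Hbb; first by rewrite Hc ?mul0r.
  rewrite coefxV; last by rewrite leq_mul2l Hbb orbT.
  case: eqP => [Eu|]; last by rewrite mulr0.
  case: eqP => [Eb|]; last by rewrite mulr0.
  exfalso; move/eqP: Hne; apply; congr (_, _); apply/val_inj => //=.
  by apply/eqP; rewrite -(eqn_pmul2l (leq_trans _ q_ge2)) // Eb.
move=> [i j] /= /andP[Hqj _].
rewrite XYmon coefX.
case: eqP => [_|]; last by rewrite mulr0.
case: eqP => [Ej|]; last by rewrite mulr0.
by move: Hqj; rewrite Ej dvdn_mulr.
Qed.

Lemma coef_fam1 cc u w (Hu : (u < N)%N) (Hw : (w < N)%N) :
  (forall ab, cc (inr ab) = 0) ->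
  coef (S cc) u w = if P (inl (Ordinal Hu, Ordinal Hw)) then cc (inl (Ordinal Hu, Ordinal Hw)) else 0.
Proof.
move=> Hc; rewrite coefS [X in _ + X]big1 ?addr0; last by move=> ab _; rewrite Hc mul0r.
have Hterm : forall ij : 'I_N * 'I_N, ij != (Ordinal Hu, Ordinal Hw) ->
    coef (xx ^+ ij.1 * yy ^+ ij.2) u w = 0.
  move=> [i j] /= Hne; rewrite XYmon coefX.
  case: eqP => [Eu|]//; case: eqP => [Ew|] //.
  exfalso; move/eqP: Hne; apply; congr (_, _); apply/val_inj => //=.
case: ifP => HP.
  rewrite (bigD1 (Ordinal Hu, Ordinal Hw)) //= XYmon coefX !eqxx mulr1.
  by rewrite big1 ?addr0 // => ij /andP[_ Hne]; rewrite Hterm ?mulr0.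
rewrite big1 // => ij HPij; rewrite Hterm ?mulr0 //.
by apply: contraFN HP => /eqP <-.
Qed.

Definition Inv (f : R) := forall a, Zq N (U2act a f - f).

Lemma Inv_QU2 f : Inv f <-> QU2inv N f.
Proof. by split=> H a; apply/inQ_Z; apply: H. Qed.

Lemma Inv_sub f g : Inv f -> Inv g -> Inv (f - g).
Proof.
move=> Hf Hg a; rewrite U2actB (_ : _ - _ - _ = (U2act a f - f) - (U2act a g - g)).
  exact: Zq_sub.
by ring.
Qed.

Lemma Inv_S cc : Inv (S cc).
Proof.
move=> a; rewrite /S U2act_sum -sumrB; apply: Zq_sum => t Ht.
rewrite U2actZ -scalerBr; apply: Zq_scale.
case: t Ht => [[i j]|[i b]] /=.
  by move=> /andP[_ HN]; apply/inQ_Z; apply: inv_fam1.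
by move=> _; rewrite inv_fam2 subrr; apply: Zq0.
Qed.


Lemma binC w : (0 < w)%N -> ('C(w, w - p ^ logn p w))%:R != 0 :> F.
Proof.
move=> w0; set P := (p ^ logn p w)%N.
have [n cpn Ew] := pfactor_coprime pr_p w0.
rewrite -/P in Ew.
have P0 : (0 < P)%N by rewrite expn_gt0 prime_gt0.
have n0 : (0 < n)%N by move: w0; rewrite Ew muln_gt0 => /andP[].
have Pw : (P <= w)%N by rewrite Ew leq_pmull.
have Hc := coefU pF (1 : F) (yy ^+ w) P (w - P).
rewrite (@sum_single _ _ (fun l : nat => coef (yy ^+ w) (P - l) (w - P + l) * ('C(w - P + l, w - P))%:R * 1 ^+ l) P) in Hc; last first.
  move=> l Hl Hne; rewrite -(mul1r (yy ^+ w)) -{1}(expr0 xx) XYmon coefX.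
  by rewrite (_ : (0 == P - l)%N && (w == w - P + l)%N = false) ?mul0r //; lia.
rewrite ltnSn -(mul1r (yy ^+ w)) -{1}(expr0 xx) XYmon coefX in Hc.
rewrite (_ : (0 == P - P)%N && (w == w - P + P)%N = true) ?mul1r ?expr1n ?mulr1 in Hc; last by lia.
rewrite (_ : (w - P + P = w)%N) in Hc; last by lia.
rewrite -Hc -XYmon expr0 mul1r U2actXn U2acty scale1r Ew mulnC exprM (frobD pF).
have [T ->] := binom2 (yy ^+ P) (xx ^+ P) n.
rewrite /coef !mcoeffD -!/(coef _ _ _) -(mul1r ((yy ^+ P) ^+ n)) -(expr0 xx) -exprM XYmon coefX.
rewrite (_ : (0 == P)%N && (P * n == P * n - P)%N = false) ?add0r; last by lia.
rewrite -exprM (mulrC (yy ^+ _)) XYmon /coef mcoeffMn -/(coef _ _ _) coefX.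
rewrite (_ : (P == P)%N && (P * n.-1 == P * n - P)%N = true); last by nia.
rewrite -exprM mXN -/(coef _ _ _) coefXM (_ : (P * 2 <= P)%N && (0 <= P * n - P)%N = false) ?addr0; last by nia.
rewrite [true%:R]/= -(dvdn_pcharf pF) -prime_coprime //.
Qed.


Lemma qbN b : (b < M)%N -> (q * b < N)%N.
Proof. by move=> Hb; rewrite NqM ltn_pmul2l // (leq_trans _ q_ge2). Qed.

Lemma indep cc : Zq N (S cc) -> forall t, P t -> cc t = 0.
Proof.
move=> HZ.
have H2 : forall d (ab : 'I_N * 'I_M), (M <= ab.2 + d)%N -> cc (inr ab) = 0.
  elim=> [|d IH] [i b] /=; first by rewrite addn0 leqNgt ltn_ord.
  case: (leqP M (b + d)) => Hbd Hd; first by apply: (IH (i, b)).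
  have := @coef_fam_qb cc i b (ltn_ord i) (ltn_ord b).
  rewrite HZ ?qbN //.
  have -> : (Ordinal (ltn_ord i), Ordinal (ltn_ord b)) = (i, b) by congr (_, _); apply/val_inj.
  move=> <- // [i' b'] /= Hb'; apply: (IH (i', b')) => /=; lia.
have H2' : forall ab, cc (inr ab) = 0 by move=> ab; apply: (H2 M); rewrite leq_addl.
case=> [[i j]|ab] Ht; last exact: H2'.
have := @coef_fam1 cc i j (ltn_ord i) (ltn_ord j) H2'.
rewrite HZ //.
have -> : (Ordinal (ltn_ord i), Ordinal (ltn_ord j)) = (i, j) by congr (_, _); apply/val_inj.
by rewrite Ht.
Qed.


Definition W f := exists cc, Zq N (f - S cc).

Lemma S_add (d1 d2 : Idx -> F) : S (fun t => d1 t + d2 t) = S d1 + S d2.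
Proof. by rewrite /S -big_split; apply: eq_bigr => t _; rewrite scalerDl. Qed.

Lemma W_shift f cc : W (f - S cc) -> W f.
Proof.
move=> [d2 H]; exists (fun t => cc t + d2 t); rewrite S_add.
by rewrite (_ : f - (S cc + S d2) = f - S cc - S d2) // opprD addrA.
Qed.

Lemma NE : N = (p ^ (k * m))%N.
Proof. by rewrite Hq -expnM. Qed.

Lemma final g : Inv g ->
  (forall i b, (i < N)%N -> (b < M)%N -> coef g i (q * b) = 0) -> W g.
Proof.
move=> Hg Hz.
pose cc : Idx -> F := fun t => match t with inl ij => coef g ij.1 ij.2 | inr _ => 0 end.
exists cc; set g1 := g - S cc.
have Hg1 : Inv g1 := Inv_sub Hg (Inv_S cc).
set h := trunc N g1.
have Hh : Inv h.
  move=> a.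
  have -> : U2act a h - h = (U2act a g1 - g1) - (U2act a (g1 - h) - (g1 - h)).
    by rewrite U2actB; ring.
  apply: Zq_sub => //; apply: Zq_sub; last exact: Zq_trunc.
  rewrite NE; apply: (Zq_U2act pF); rewrite -NE; exact: Zq_trunc.
have hcoef : forall u w (Hu : (u < N)%N) (Hw : (w < N)%N), coef h u w =
    coef g u w - (if P (inl (Ordinal Hu, Ordinal Hw)) then coef g u w else 0).
  move=> u w Hu Hw; rewrite /h coef_trunc Hu Hw /= /g1 /coef mcoeffB -!/(coef _ _ _).
  by rewrite (coef_fam1 (cc := cc) Hu Hw).
have hgood : forall u w (Hu : (u < N)%N) (Hw : (w < N)%N),
    P (inl (Ordinal Hu, Ordinal Hw)) || (q %| w)%N -> coef h u w = 0.
  move=> u w Hu Hw /orP[HP|Hqw]; first by rewrite hcoef HP subrr.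
  have Hw' : w = (q * (w %/ q))%N by rewrite mulnC divnK.
  have Hb : (w %/ q < M)%N by rewrite -(ltn_pmul2l (leq_trans _ q_ge2)) // -Hw' -NqM.
  rewrite hcoef {1}Hw' Hz // sub0r.
  by rewrite /famPred /= Hqw /= oppr0.
have claim : forall d u w, (u < N)%N -> (w < N)%N -> (N <= w + d)%N -> coef h u w = 0.
  elim=> [|d IH] u w Hu Hw Hd; first by move: Hd; rewrite addn0 leqNgt Hw.
  case: (leqP N (w + d)) => Hwd; first exact: IH.
  case Hgood: (P (inl (Ordinal Hu, Ordinal Hw)) || (q %| w)%N); first exact: hgood.
  move/negbT: Hgood; rewrite negb_or /= => /andP[Hbad Hqw].
  rewrite Hqw /= -ltnNge in Hbad.
  set Pw := (p ^ logn p w)%N in Hbad *.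
  have w0 : (0 < w)%N by rewrite lt0n; apply: contraNneq Hqw => ->; rewrite dvdn0.
  have Pw_le : (Pw <= w)%N by apply: dvdn_leq w0 (pfactor_dvdnn p w).
  have Pw0 : (0 < Pw)%N by rewrite expn_gt0 prime_gt0.
  have Pw_lt : (Pw < q)%N.
    rewrite Hq ltn_exp2l ?prime_gt1 // ltnNge; apply: contra Hqw => Hk.
    by rewrite Hq pfactor_dvdn.
  pose E l := if l == 0%N then 0 else
    coef h (u + Pw - l) (w - Pw + l) * ('C(w - Pw + l, w - Pw))%:R.
  have Hroot : forall a, (\poly_(l < Pw.+1) E l).[a] = 0.
    move=> a; have Z := Hh a (u + Pw)%N (w - Pw)%N Hbad (leq_ltn_trans (leq_subr _ _) Hw).
    move: Z; rewrite /coef mcoeffB -!/(coef _ _ _) (coefU pF) horner_poly.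
    rewrite -(big_mkord xpredT (fun l => coef h (u + Pw - l) (w - Pw + l) * ('C(w - Pw + l, w - Pw))%:R * a ^+ l)) -(big_mkord xpredT (fun l => E l * a ^+ l)).
    rewrite (big_cat_nat (n := Pw.+1)) //=; last by lia.
    rewrite [X in _ + X - _ = _ -> _]big_nat_cond [X in _ + X - _ = _ -> _]big1 ?addr0; last first.
      move=> l /andP[/andP[Hl1 Hl2] _].
      suff -> : coef h (u + Pw - l) (w - Pw + l) = 0 by rewrite !mul0r.
      case: (ltnP (w - Pw + l) N) => Hn.
        apply: IH; lia.
      by rewrite /h coef_trunc ifF //; apply/negbTE; rewrite negb_and -!leqNgt Hn orbT.
    rewrite !big_nat_recl //= subn0 addn0 binn expr0 !mulr1 addrAC subrr add0r => Z.
    exact: Z.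
  have HQ := poly_finF (leq_trans (size_poly _ _) Pw_lt) Hroot.
  have := congr1 (fun Q : {poly F} => Q`_Pw) HQ.
  rewrite coef_poly ltnSn coef0 /E ifF; last by rewrite eqn0Ngt Pw0.
  rewrite (_ : u + Pw - Pw = u)%N; last by lia.
  rewrite (_ : w - Pw + Pw = w)%N; last by lia.
  move/eqP; rewrite mulf_eq0 => /orP[/eqP //|].
  by rewrite (negbTE (binC w0)).
have Zh : Zq N h by move=> u w Hu Hw; apply: (claim N) => //; rewrite leq_addl.
rewrite (_ : g1 = (g1 - h) + h); last by rewrite subrK.
by apply: Zq_add => //; apply: Zq_trunc.
Qed.


Lemma LA n : (n <= M)%N -> forall g, Inv g ->
  (forall i b, (i < N)%N -> (n <= b)%N -> (b < M)%N -> coef g i (q * b) = 0) -> W g.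
Proof.
elim: n => [|n IH] HnM g Hg Hz.
  by apply: final => // i b Hi Hb; apply: Hz.
pose d : Idx -> F := fun t => match t with
  | inl _ => 0 | inr ab => if (ab.2 == n :> nat) then coef g ab.1 (q * n) else 0 end.
apply: (@W_shift _ d); apply: IH; first by lia.
  exact: Inv_sub Hg (Inv_S d).
move=> i b Hi Hnb Hb; rewrite /coef mcoeffB -!/(coef _ _ _) (@coef_fam_qb d i b Hi Hb).
  rewrite /=; case: eqP => [->|Hne]; first by rewrite subrr.
  by rewrite Hz ?subr0 //; lia.
move=> [i' b'] /= Hbb; rewrite ifF //; apply/negbTE; apply/eqP; lia.
Qed.

Lemma main_basis : @isBasisQU2 F N _ P B.
Proof.
split.
- move=> [[i j]|[i b]] /= HP a.
    by case/andP: HP => _ HN; apply: inv_fam1.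
  by rewrite inv_fam2 subrr; exists 0, 0; rewrite !mulr0 addr0.
- by move=> cc /inQ_Z HZ t Ht; apply: (indep HZ).
- move=> f /Inv_QU2 Hf.
  have [|cc Hc] := LA (leqnn M) Hf.
    by move=> i b _ H1 H2; exfalso; move: H2; rewrite ltnNge H1.
  by exists cc; apply/inQ_Z.
Qed.

End Main.

Theorem mainTheorem12 (F : finFieldType) (p k m : nat) :
  prime p -> (0 < k)%N -> #|F| = (p ^ k)%N -> (1 <= m)%N ->
  @isBasisQU2 F (#|F| ^ m)%N _ (@famPred #|F| p (#|F| ^ m) (#|F| ^ m.-1))
    (@famPoly F (#|F| ^ m) (#|F| ^ m.-1)).
Proof. by move=> pr_p k_gt0 Hq m_ge1; apply: (@main_basis F p k pr_p k_gt0 Hq m m_ge1). Qed.
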